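(* For $\theta\in(-\pi,\pi]$ let $U(\theta)=R\sigma^+R^\dagger$ with $R=e^{-i\theta\sigma^y/2}$ (so $U(\theta)$ annihilates the pure state with Bloch vector $(\sin\theta,0,\cos\theta)$), and for a probability density $p$ on $(-\pi,\pi]$ consider the qubit Lindblad equation $\partial_t\rho=\int p(\theta)\,\mathcal D(U(\theta))\rho\,d\theta$, with stationary state $\rho_\oplus$ and fidelity $F_\infty=\langle\uparrow|\rho_\oplus|\uparrow\rangle$ with $|\uparrow\rangle$. (i) If $p$ is uniform on $[-\tilde\theta,\tilde\theta]$ with $0<\tilde\theta\le\pi$, then $F_\infty=\tfrac12+\tfrac{4\sin\tilde\theta}{6\tilde\theta+\sin2\tilde\theta}=1-\tfrac{\tilde\theta^4}{80}+O(\tilde\theta^6)$ as $\tilde\theta\to0$. (ii) If $p(\theta)=\frac{e^{\sigma^{-2}\cos\theta}}{2\pi I_0(\sigma^{-2})}$ (von Mises) with $\sigma>0$, then $F_\infty=\tfrac12+\Big(\tfrac{2I_0(\sigma^{-2})}{I_1(\sigma^{-2})}-\sigma^2\Big)^{-1}=1-\tfrac{3}{16}\sigma^4+O(\sigma^6)$ as $\sigma\to0$. In both cases the off-diagonal entry of $\rho_\oplus$ in the basis $\{|\uparrow\rangle,|\downarrow\rangle\}$ vanishes.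
   Context: $\sigma^+=|\uparrow\rangle\langle\downarrow|$; $\mathcal D(L)\rho:=L\rho L^\dagger-\tfrac12\{L^\dagger L,\rho\}$; $I_\nu$ denotes the modified Bessel function of the first kind of order $\nu$. *)

(* Defs.v *)
From Stdlib Require Import Reals.
From Coquelicot Require Import Coquelicot.
Open Scope R_scope.

(* 2x2 complex matrices, written in the basis {|up>, |down>} (index 1 = up, 2 = down). *)
Record M2 := mkM2 { m11 : C; m12 : C; m21 : C; m22 : C }.

Definition M2add (A B : M2) : M2 :=
  mkM2 (Cplus (m11 A) (m11 B)) (Cplus (m12 A) (m12 B))
       (Cplus (m21 A) (m21 B)) (Cplus (m22 A) (m22 B)).
Definition M2sub (A B : M2) : M2 :=
  mkM2 (Cminus (m11 A) (m11 B)) (Cminus (m12 A) (m12 B))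
       (Cminus (m21 A) (m21 B)) (Cminus (m22 A) (m22 B)).
Definition M2scale (c : C) (A : M2) : M2 :=
  mkM2 (Cmult c (m11 A)) (Cmult c (m12 A)) (Cmult c (m21 A)) (Cmult c (m22 A)).
Definition M2mul (A B : M2) : M2 :=
  mkM2 (Cplus (Cmult (m11 A) (m11 B)) (Cmult (m12 A) (m21 B)))
       (Cplus (Cmult (m11 A) (m12 B)) (Cmult (m12 A) (m22 B)))
       (Cplus (Cmult (m21 A) (m11 B)) (Cmult (m22 A) (m21 B)))
       (Cplus (Cmult (m21 A) (m12 B)) (Cmult (m22 A) (m22 B))).
Definition M2dag (A : M2) : M2 :=
  mkM2 (Cconj (m11 A)) (Cconj (m21 A)) (Cconj (m12 A)) (Cconj (m22 A)).
Definition M2zero : M2 := mkM2 (RtoC 0) (RtoC 0) (RtoC 0) (RtoC 0).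
Definition M2id : M2 := mkM2 (RtoC 1) (RtoC 0) (RtoC 0) (RtoC 1).

Definition sigma_plus : M2 := mkM2 (RtoC 0) (RtoC 1) (RtoC 0) (RtoC 0).
Definition sigma_y : M2 := mkM2 (RtoC 0) (Copp Ci) Ci (RtoC 0).

(* R(theta) = exp(-i theta sigma^y / 2) = cos(theta/2) I - i sin(theta/2) sigma^y
   (exponential series summed using (sigma^y)^2 = I). *)
Definition Rrot (theta : R) : M2 :=
  M2sub (M2scale (RtoC (cos (theta / 2))) M2id)
        (M2scale (Cmult Ci (RtoC (sin (theta / 2)))) sigma_y).

Definition Ujump (theta : R) : M2 :=
  M2mul (M2mul (Rrot theta) sigma_plus) (M2dag (Rrot theta)).

Definition dissipator (L rho : M2) : M2 :=
  M2sub (M2mul (M2mul L rho) (M2dag L))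
        (M2scale (RtoC (1/2))
           (M2add (M2mul (M2mul (M2dag L) L) rho) (M2mul rho (M2mul (M2dag L) L)))).

Definition lindblad_gen (p : R -> R) (rho : M2) : M2 :=
  let f := fun (g : M2 -> C) => RInt (V := C_R_CompleteNormedModule)
             (fun th => Cmult (RtoC (p th)) (g (dissipator (Ujump th) rho))) (-PI) PI in
  mkM2 (f m11) (f m12) (f m21) (f m22).

Definition is_density (rho : M2) : Prop :=
  M2dag rho = rho /\
  (forall v1 v2 : C,
     0 <= Re (Cplus (Cmult (Cconj v1) (Cplus (Cmult (m11 rho) v1) (Cmult (m12 rho) v2)))
                    (Cmult (Cconj v2) (Cplus (Cmult (m21 rho) v1) (Cmult (m22 rho) v2))))) /\
  Cplus (m11 rho) (m22 rho) = RtoC 1.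

Definition is_stationary (p : R -> R) (rho : M2) : Prop :=
  is_density rho /\ lindblad_gen p rho = M2zero.

Definition p_uniform (tt : R) (th : R) : R :=
  if Rle_dec (Rabs th) tt then / (2 * tt) else 0.

Definition BesselI (n : nat) (x : R) : R :=
  Series (fun k => (x / 2) ^ (2 * k + n) / (INR (Factorial.fact k) * INR (Factorial.fact (k + n)))).

Definition p_vonMises (sigma : R) (th : R) : R :=
  exp (/ sigma ^ 2 * cos th) / (2 * PI * BesselI 0 (/ sigma ^ 2)).

Definition F_uniform (tt : R) : R := 1/2 + 4 * sin tt / (6 * tt + sin (2 * tt)).
Definition F_vonMises (sigma : R) : R :=
  1/2 + / (2 * BesselI 0 (/ sigma ^ 2) / BesselI 1 (/ sigma ^ 2) - sigma ^ 2).

(* Main.v *)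
Require Import Defs.
From Stdlib Require Import Reals Lra Lia Nsatz Factorial.
From Coquelicot Require Import Coquelicot.
Open Scope R_scope.
Lemma C_eq (x y : C) : fst x = fst y -> snd x = snd y -> x = y.
Proof. destruct x, y; simpl; intros; subst; auto. Qed.

Lemma is_RInt_RtoC_mult (f : R -> R) (a b I : R) (K : C) :
  is_RInt f a b I ->
  is_RInt (V := C_R_CompleteNormedModule) (fun t => Cmult (RtoC (f t)) K) a b (Cmult (RtoC I) K).
Proof.
  intro Hf. destruct K as [k1 k2].
  assert (E : forall t, Cmult (RtoC (f t)) (k1, k2) = (f t * k1, f t * k2)).
  { intro t; apply C_eq; simpl; ring. }
  replace (Cmult (RtoC I) (k1,k2)) with (I * k1, I * k2) by (apply C_eq; simpl; ring).
  eapply is_RInt_ext. { intros; symmetry; apply E. }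
  apply (is_RInt_fct_extend_pair (U := R_NormedModule) (V := R_NormedModule)); simpl.
  - eapply is_RInt_ext. { intros; apply Rmult_comm. }
    replace (I * k1) with (scal k1 I) by (unfold scal; simpl; unfold mult; simpl; ring).
    apply (is_RInt_scal f a b k1 I Hf).
  - eapply is_RInt_ext. { intros; apply Rmult_comm. }
    replace (I * k2) with (scal k2 I) by (unfold scal; simpl; unfold mult; simpl; ring).
    apply (is_RInt_scal f a b k2 I Hf).
Qed.

Definition comb4 (w1 w2 w3 w4 : R) (K1 K2 K3 K4 : C) : C :=
  Cplus (Cplus (Cmult (RtoC w1) K1) (Cmult (RtoC w2) K2))
        (Cplus (Cmult (RtoC w3) K3) (Cmult (RtoC w4) K4)).

Lemma Rrot_eq th : Rrot th = mkM2 (RtoC (cos (th/2))) (RtoC (- sin (th/2))) (RtoC (sin (th/2))) (RtoC (cos (th/2))).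
Proof.
  unfold Rrot, M2sub, M2scale, M2id, sigma_y; cbn [m11 m12 m21 m22].
  f_equal; apply C_eq; simpl; ring.
Qed.
Lemma Ujump_eq th : Ujump th =
  mkM2 (RtoC (- cos (th/2) * sin (th/2))) (RtoC (cos (th/2) * cos (th/2)))
       (RtoC (- sin (th/2) * sin (th/2))) (RtoC (cos (th/2) * sin (th/2))).
Proof.
  unfold Ujump; rewrite Rrot_eq.
  unfold M2mul, M2dag, sigma_plus; cbn [m11 m12 m21 m22].
  f_equal; apply C_eq; simpl; ring.
Qed.

Definition Lm (x y : R) := mkM2 (RtoC (- x*y)) (RtoC (x*x)) (RtoC (- y*y)) (RtoC (x*y)).

Ltac dissgen := intro H; assert (H4 : 4 * / 4 = 1) by field; assert (H2 : 2 * / 2 = 1) by field;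
  unfold Lm, comb4, dissipator, M2sub, M2scale, M2mul, M2dag, M2add; cbn [m11 m12 m21 m22];
  apply C_eq; simpl; unfold Rdiv; nsatz.

Lemma diss_gen (x y : R) a b c d : x*x+y*y = 1 ->
  dissipator (Lm x y) (mkM2 a b c d) =
  mkM2
  (comb4 1 ((x*x-y*y)^2) ((2*x*y)*(x*x-y*y)) (x*x-y*y)
    (Cmult (RtoC (-1/4)) (Cminus a d)) (Cmult (RtoC (-1/4)) (Cminus a d))
    (Cmult (RtoC (-1/4)) (Cplus b c)) (Cmult (RtoC (1/2)) (Cplus a d)))
  (comb4 1 ((2*x*y)^2) ((2*x*y)*(x*x-y*y)) (2*x*y)
    (Cmult (RtoC (-1/2)) b) (Cmult (RtoC (-1/4)) (Cplus b c))
    (Cmult (RtoC (-1/4)) (Cminus a d)) (Cmult (RtoC (1/2)) (Cplus a d)))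
  (comb4 1 ((2*x*y)^2) ((2*x*y)*(x*x-y*y)) (2*x*y)
    (Cmult (RtoC (-1/2)) c) (Cmult (RtoC (-1/4)) (Cplus b c))
    (Cmult (RtoC (-1/4)) (Cminus a d)) (Cmult (RtoC (1/2)) (Cplus a d)))
  (comb4 1 ((x*x-y*y)^2) ((2*x*y)*(x*x-y*y)) (x*x-y*y)
    (Cmult (RtoC (1/4)) (Cminus a d)) (Cmult (RtoC (1/4)) (Cminus a d))
    (Cmult (RtoC (1/4)) (Cplus b c)) (Cmult (RtoC (-1/2)) (Cplus a d))).
Proof.
  destruct a as [a1 a2], b as [b1 b2], c as [c1 c2], d as [d1 d2].
  intro H. assert (H4 : 4 * / 4 = 1) by field; assert (H2 : 2 * / 2 = 1) by field.
  unfold Lm, comb4, dissipator, M2sub, M2scale, M2mul, M2dag, M2add; cbn [m11 m12 m21 m22].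
  f_equal; apply C_eq; simpl; unfold Rdiv; nsatz.
Qed.

Lemma diss_th th a b c d :
  dissipator (Ujump th) (mkM2 a b c d) =
  mkM2
  (comb4 1 (cos th ^2) (sin th * cos th) (cos th)
    (Cmult (RtoC (-1/4)) (Cminus a d)) (Cmult (RtoC (-1/4)) (Cminus a d))
    (Cmult (RtoC (-1/4)) (Cplus b c)) (Cmult (RtoC (1/2)) (Cplus a d)))
  (comb4 1 (sin th ^2) (sin th * cos th) (sin th)
    (Cmult (RtoC (-1/2)) b) (Cmult (RtoC (-1/4)) (Cplus b c))
    (Cmult (RtoC (-1/4)) (Cminus a d)) (Cmult (RtoC (1/2)) (Cplus a d)))
  (comb4 1 (sin th ^2) (sin th * cos th) (sin th)
    (Cmult (RtoC (-1/2)) c) (Cmult (RtoC (-1/4)) (Cplus b c))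
    (Cmult (RtoC (-1/4)) (Cminus a d)) (Cmult (RtoC (1/2)) (Cplus a d)))
  (comb4 1 (cos th ^2) (sin th * cos th) (cos th)
    (Cmult (RtoC (1/4)) (Cminus a d)) (Cmult (RtoC (1/4)) (Cminus a d))
    (Cmult (RtoC (1/4)) (Cplus b c)) (Cmult (RtoC (-1/2)) (Cplus a d))).
Proof.
  rewrite Ujump_eq. fold (Lm (cos (th/2)) (sin (th/2))).
  rewrite diss_gen.
  2: { rewrite <- (sin2_cos2 (th/2)); unfold Rsqr; ring. }
  replace (cos (th/2) * cos (th/2) - sin (th/2) * sin (th/2)) with (cos th)
    by (replace th with (2 * (th/2)) at 1 by field; rewrite cos_2a; ring).
  replace (2 * cos (th/2) * sin (th/2)) with (sin th)
    by (replace th with (2 * (th/2)) at 1 by field; rewrite sin_2a; ring).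
  reflexivity.
Qed.

Lemma int_comb4 (p w1 w2 w3 w4 : R -> R) (K1 K2 K3 K4 : C) (I1 I2 I3 I4 a b : R) :
  is_RInt (fun t => p t * w1 t) a b I1 ->
  is_RInt (fun t => p t * w2 t) a b I2 ->
  is_RInt (fun t => p t * w3 t) a b I3 ->
  is_RInt (fun t => p t * w4 t) a b I4 ->
  is_RInt (V := C_R_CompleteNormedModule)
    (fun t => Cmult (RtoC (p t)) (comb4 (w1 t) (w2 t) (w3 t) (w4 t) K1 K2 K3 K4)) a b
    (comb4 I1 I2 I3 I4 K1 K2 K3 K4).
Proof.
  intros H1 H2 H3 H4.
  eapply is_RInt_ext.
  { intros t _. symmetry.
    instantiate (1 := fun t => comb4 (p t * w1 t) (p t * w2 t) (p t * w3 t) (p t * w4 t) K1 K2 K3 K4).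
    simpl. unfold comb4. destruct K1, K2, K3, K4. apply C_eq; simpl; ring. }
  unfold comb4.
  apply (is_RInt_plus (V := C_R_CompleteNormedModule)); apply (is_RInt_plus (V := C_R_CompleteNormedModule));
    apply is_RInt_RtoC_mult; assumption.
Qed.

Lemma gen_formula (p : R -> R) a b c d Z P Q A T S :
  is_RInt p (-PI) PI Z ->
  is_RInt (fun t => p t * cos t ^ 2) (-PI) PI P ->
  is_RInt (fun t => p t * (sin t * cos t)) (-PI) PI Q ->
  is_RInt (fun t => p t * cos t) (-PI) PI A ->
  is_RInt (fun t => p t * sin t ^ 2) (-PI) PI T ->
  is_RInt (fun t => p t * sin t) (-PI) PI S ->
  lindblad_gen p (mkM2 a b c d) =
  mkM2
  (comb4 Z P Q A
    (Cmult (RtoC (-1/4)) (Cminus a d)) (Cmult (RtoC (-1/4)) (Cminus a d))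
    (Cmult (RtoC (-1/4)) (Cplus b c)) (Cmult (RtoC (1/2)) (Cplus a d)))
  (comb4 Z T Q S
    (Cmult (RtoC (-1/2)) b) (Cmult (RtoC (-1/4)) (Cplus b c))
    (Cmult (RtoC (-1/4)) (Cminus a d)) (Cmult (RtoC (1/2)) (Cplus a d)))
  (comb4 Z T Q S
    (Cmult (RtoC (-1/2)) c) (Cmult (RtoC (-1/4)) (Cplus b c))
    (Cmult (RtoC (-1/4)) (Cminus a d)) (Cmult (RtoC (1/2)) (Cplus a d)))
  (comb4 Z P Q A
    (Cmult (RtoC (1/4)) (Cminus a d)) (Cmult (RtoC (1/4)) (Cminus a d))
    (Cmult (RtoC (1/4)) (Cplus b c)) (Cmult (RtoC (-1/2)) (Cplus a d))).
Proof.
  intros HZ HP HQ HA HT HS.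
  assert (HZ' : is_RInt (fun t => p t * 1) (-PI) PI Z)
    by (eapply is_RInt_ext; [intros; symmetry; apply Rmult_1_r | exact HZ]).
  unfold lindblad_gen; f_equal; apply is_RInt_unique;
  (eapply is_RInt_ext; [intros t _; rewrite diss_th; cbn [m11 m12 m21 m22]; reflexivity | ]);
  apply int_comb4; assumption.
Qed.

Lemma stat_char (p : R -> R) Z P A :
  is_RInt p (-PI) PI Z ->
  is_RInt (fun t => p t * cos t ^ 2) (-PI) PI P ->
  is_RInt (fun t => p t * (sin t * cos t)) (-PI) PI 0 ->
  is_RInt (fun t => p t * cos t) (-PI) PI A ->
  is_RInt (fun t => p t * sin t ^ 2) (-PI) PI (Z - P) ->
  is_RInt (fun t => p t * sin t) (-PI) PI 0 ->
  0 < Z -> 0 <= P <= Z -> Rabs (2 * A) <= Z + P ->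
  (exists rho, is_stationary p rho) /\
  (forall rho, is_stationary p rho ->
     m11 rho = RtoC ((1 + 2 * A / (Z + P)) / 2) /\ m12 rho = RtoC 0 /\ m21 rho = RtoC 0).
Proof.
  intros HZ HP HQ HA HT HS Zpos HPb HAb.
  assert (ZP : 0 < Z + P) by lra.
  set (f := (1 + 2 * A / (Z + P)) / 2).
  assert (Hf : 0 <= f <= 1).
  { unfold f. assert (Rabs (2 * A / (Z + P)) <= 1).
    { unfold Rdiv; rewrite Rabs_mult, Rabs_inv, (Rabs_right (Z+P)) by lra.
      apply (Rmult_le_reg_r (Z+P)); [lra|]. field_simplify; lra. }
    apply Rabs_le_between in H; lra. }
  split.
  - exists (mkM2 (RtoC f) (RtoC 0) (RtoC 0) (RtoC (1 - f))).
    split; [split; [|split]|].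
    + unfold M2dag; cbn [m11 m12 m21 m22]. f_equal; apply C_eq; simpl; ring.
    + intros [x1 x2] [y1 y2]. cbn [m11 m12 m21 m22]. simpl. nra.
    + cbn [m11 m22]. apply C_eq; simpl; ring.
    + rewrite (gen_formula p _ _ _ _ Z P 0 A (Z - P) 0); auto.
      unfold M2zero, comb4. f_equal; apply C_eq; simpl; unfold f; field; lra.
  - intros [a b c d] [[Hdag [Hpos Htr]] Hgen].
    rewrite (gen_formula p _ _ _ _ Z P 0 A (Z - P) 0) in Hgen; auto.
    destruct a as [a1 a2], b as [b1 b2], c as [c1 c2], d as [d1 d2].
    cbn [m11 m22] in Htr.
    pose proof (f_equal fst Htr) as T1. pose proof (f_equal snd Htr) as T2. simpl in T1, T2.
    pose proof (f_equal (fun M => fst (m11 M)) Hgen) as F1.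
    pose proof (f_equal (fun M => snd (m11 M)) Hgen) as G1.
    pose proof (f_equal (fun M => fst (m12 M)) Hgen) as F2.
    pose proof (f_equal (fun M => snd (m12 M)) Hgen) as G2.
    pose proof (f_equal (fun M => fst (m21 M)) Hgen) as F3.
    pose proof (f_equal (fun M => snd (m21 M)) Hgen) as G3.
    clear Hgen Hpos Hdag.
    unfold comb4, M2zero in *; simpl in F1, G1, F2, G2, F3, G3.
    cbn [m11 m12 m21].
    assert (ad1 : a1 - d1 = 2 * A / (Z + P)).
    { apply (Rmult_eq_reg_r (Z + P)); [|lra]. field_simplify; [|lra]. nra. }
    assert (ad2 : a2 - d2 = 0).
    { apply (Rmult_eq_reg_r (Z + P)); [|lra]. nra. }
    assert (bc1 : b1 = c1) by nra. assert (bc2 : b2 = c2) by nra.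
    subst c1 c2.
    assert (b1z : b1 = 0) by nra. assert (b2z : b2 = 0) by nra.
    subst b1 b2.
    split; [|split]; apply C_eq; simpl; unfold f; lra.
Qed.

Lemma nonneg_conditions (p : R -> R) Z P A :
  (forall t, -PI < t < PI -> 0 <= p t) ->
  is_RInt p (-PI) PI Z ->
  is_RInt (fun t => p t * cos t ^ 2) (-PI) PI P ->
  is_RInt (fun t => p t * cos t) (-PI) PI A ->
  0 <= P /\ P <= Z /\ Rabs (2 * A) <= Z + P.
Proof.
  intros Hp HZ HP HA.
  assert (PIpos := PI_RGT_0).
  split; [|split].
  - apply is_RInt_ge_0 with (2 := HP); [lra|]. intros; apply Rmult_le_pos; [apply Hp; lra| apply pow2_ge_0].
  - assert (H := is_RInt_minus _ _ _ _ _ _ HZ HP).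
    assert (0 <= minus Z P); [|unfold minus, plus, opp in *; simpl in *; lra].
    apply is_RInt_ge_0 with (2 := H); [lra|]. intros x Hx.
    unfold minus, plus, opp; simpl. pose proof (COS_bound x).
    assert (0 <= p x) by (apply Hp; lra). assert (0 <= p x * (1 - cos x ^ 2)) by (apply Rmult_le_pos; nra). lra.
  - assert (H1 := is_RInt_plus _ _ _ _ _ _ HZ HP).
    assert (H2 := is_RInt_scal _ _ _ 2 _ HA).
    assert (Hm := is_RInt_minus _ _ _ _ _ _ H1 H2).
    assert (Hq := is_RInt_plus _ _ _ _ _ _ H1 H2).
    assert (0 <= minus (plus Z P) (scal 2 A)).
    { apply is_RInt_ge_0 with (2 := Hm); [lra|]. intros x Hx.
      unfold minus, plus, opp, scal; simpl; unfold mult; simpl.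
      assert (0 <= p x) by (apply Hp; lra). assert (0 <= p x * (1 - cos x)^2) by (apply Rmult_le_pos; [lra|apply pow2_ge_0]). nra. }
    assert (0 <= plus (plus Z P) (scal 2 A)).
    { apply is_RInt_ge_0 with (2 := Hq); [lra|]. intros x Hx.
      unfold minus, plus, opp, scal; simpl; unfold mult; simpl.
      assert (0 <= p x) by (apply Hp; lra). assert (0 <= p x * (1 + cos x)^2) by (apply Rmult_le_pos; [lra|apply pow2_ge_0]). nra. }
    unfold minus, plus, opp, scal in *; simpl in *; unfold mult in *; simpl in *.
    apply Rabs_le; lra.
Qed.

Lemma is_RInt_zero (a b : R) : is_RInt (fun _ : R => 0) a b 0.
Proof.
  pose proof (is_RInt_const (V := R_NormedModule) a b 0) as H.
  replace (scal (b - a) (0:R_NormedModule)) with 0 in H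
    by (unfold scal; simpl; unfold mult; simpl; ring). exact H.
Qed.

Lemma unif_int (t : R) (w W : R -> R) :
  0 < t <= PI ->
  (forall x, is_derive W x (w x)) -> (forall x, continuous w x) ->
  is_RInt (fun x => p_uniform t x * w x) (-PI) PI ((W t - W (-t)) / (2 * t)).
Proof.
  intros Ht HW Hw.
  replace ((W t - W (-t)) / (2 * t)) with (plus (plus 0 ((W t - W (-t)) / (2 * t))) 0)
    by (unfold plus; simpl; ring).
  apply (is_RInt_Chasles (V:=R_NormedModule) _ (-PI) t PI); [apply (is_RInt_Chasles (V:=R_NormedModule) _ (-PI) (-t) t)|].
  - eapply is_RInt_ext; [|apply (is_RInt_zero (-PI) (-t))].
    intros x Hx. rewrite Rmin_left in Hx by lra. rewrite Rmax_right in Hx by lra.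
    unfold p_uniform. destruct (Rle_dec (Rabs x) t) as [h|h].
    + apply Rabs_le_between in h; lra.
    + unfold scal; simpl; unfold mult; simpl; ring.
  - replace ((W t - W (-t)) / (2 * t)) with (scal (/ (2*t)) (minus (W t) (W (-t))))
      by (unfold scal, minus, plus, opp; simpl; unfold mult; simpl; field; lra).
    eapply is_RInt_ext.
    2: { apply (is_RInt_scal (fun x => w x) (-t) t (/ (2*t)) (minus (W t) (W (-t)))).
         apply (is_RInt_derive W w). intros; apply HW. intros; apply Hw. }
    intros x Hx. rewrite Rmin_left in Hx by lra. rewrite Rmax_right in Hx by lra.
    unfold p_uniform. destruct (Rle_dec (Rabs x) t) as [h|h].
    + unfold scal; simpl; unfold mult; simpl; ring.
    + exfalso; apply h; apply Rabs_le; lra.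
  - eapply is_RInt_ext; [|apply (is_RInt_zero t PI)].
    intros x Hx. rewrite Rmin_left in Hx by lra. rewrite Rmax_right in Hx by lra.
    unfold p_uniform. destruct (Rle_dec (Rabs x) t) as [h|h].
    + apply Rabs_le_between in h; lra.
    + unfold scal; simpl; unfold mult; simpl; ring.
Qed.

Ltac cont_tac := intro; apply (ex_derive_continuous (K:=R_AbsRing) (V:=R_NormedModule)); auto_derive; auto.

Lemma part_i_a (tt : R) : 0 < tt <= PI ->
  (exists rho, is_stationary (p_uniform tt) rho) /\
  (forall rho, is_stationary (p_uniform tt) rho ->
     m11 rho = RtoC (F_uniform tt) /\ m12 rho = RtoC 0 /\ m21 rho = RtoC 0).
Proof.
  intros Ht.
  assert (sc := sin2_cos2 tt). unfold Rsqr in sc.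
  assert (HZ : is_RInt (p_uniform tt) (-PI) PI 1).
  { replace 1 with ((tt - (- tt)) / (2 * tt)) by (field; lra).
    eapply is_RInt_ext; [| apply (unif_int tt (fun _ => 1) (fun x => x)); auto].
    - intros; simpl; ring.
    - intros; auto_derive; auto.
    - cont_tac. }
  assert (HP : is_RInt (fun x => p_uniform tt x * cos x ^ 2) (-PI) PI ((tt + sin tt * cos tt) / (2 * tt))).
  { replace ((tt + sin tt * cos tt) / (2 * tt)) with
      ((((tt + sin tt * cos tt) / 2) - ((- tt + sin (-tt) * cos (-tt)) / 2)) / (2 * tt))
      by (rewrite sin_neg, cos_neg; field; lra).
    apply (unif_int tt (fun x => cos x ^ 2) (fun x => (x + sin x * cos x) / 2)); auto.
    - intros x; auto_derive; auto. pose proof (sin2_cos2 x); unfold Rsqr in *; nra.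
    - cont_tac. }
  assert (HQ : is_RInt (fun x => p_uniform tt x * (sin x * cos x)) (-PI) PI 0).
  { replace 0 with ((sin tt ^ 2 / 2 - sin (-tt) ^ 2 / 2) / (2 * tt))
      by (rewrite sin_neg; field; lra).
    apply (unif_int tt (fun x => sin x * cos x) (fun x => sin x ^ 2 / 2)); auto.
    - intros x; auto_derive; auto. field.
    - cont_tac. }
  assert (HA : is_RInt (fun x => p_uniform tt x * cos x) (-PI) PI (sin tt / tt)).
  { replace (sin tt / tt) with ((sin tt - sin (-tt)) / (2 * tt))
      by (rewrite sin_neg; field; lra).
    apply (unif_int tt cos sin); auto.
    - intros x; auto_derive; auto. ring.
    - cont_tac. }
  assert (HT : is_RInt (fun x => p_uniform tt x * sin x ^ 2) (-PI) PI (1 - (tt + sin tt * cos tt) / (2 * tt))).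
  { replace (1 - (tt + sin tt * cos tt) / (2 * tt)) with
      ((((tt - sin tt * cos tt) / 2) - ((- tt - sin (-tt) * cos (-tt)) / 2)) / (2 * tt))
      by (rewrite sin_neg, cos_neg; field; lra).
    apply (unif_int tt (fun x => sin x ^ 2) (fun x => (x - sin x * cos x) / 2)); auto.
    - intros x; auto_derive; auto. pose proof (sin2_cos2 x); unfold Rsqr in *; nra.
    - cont_tac. }
  assert (HS : is_RInt (fun x => p_uniform tt x * sin x) (-PI) PI 0).
  { replace 0 with ((- cos tt - - cos (-tt)) / (2 * tt))
      by (rewrite cos_neg; field; lra).
    apply (unif_int tt sin (fun x => - cos x)); auto.
    - intros x; auto_derive; auto. ring.
    - cont_tac. }
  assert (Hp : forall t, -PI < t < PI -> 0 <= p_uniform tt t).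
  { intros t _; unfold p_uniform; destruct (Rle_dec (Rabs t) tt); [|lra].
    left; apply Rinv_0_lt_compat; lra. }
  destruct (nonneg_conditions _ _ _ _ Hp HZ HP HA) as [C1 [C2 C3]].
  destruct (stat_char _ _ _ _ HZ HP HQ HA HT HS) as [Ex Un]; [lra|lra|lra|].
  split; [exact Ex|].
  intros rho Hr. destruct (Un rho Hr) as [U1 U2]. split; [|exact U2].
  rewrite U1. f_equal. unfold F_uniform. rewrite sin_2a.
  assert (0 < 3 * tt + sin tt * cos tt).
  { assert (0 <= tt + sin tt * cos tt).
    { apply (Rmult_le_reg_r (/ (2 * tt))). apply Rinv_0_lt_compat; lra.
      rewrite Rmult_0_l. exact C1. }
    lra. }
  field; lra.
Qed.

Lemma sin_approx3 (a : R) : sin_approx a 3 = a - a^3/6 + a^5/120 - a^7/5040.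
Proof. unfold sin_approx; cbn [sum_f_R0]; unfold sin_term. rewrite !INR_IZR_INZ.
 repeat match goal with |- context [Z.of_nat ?n] => let v := eval vm_compute in (Z.of_nat n) in change (Z.of_nat n) with v end.
 simpl pow. field. Qed.
Lemma sin_approx4 (a : R) : sin_approx a 4 = a - a^3/6 + a^5/120 - a^7/5040 + a^9/362880.
Proof. unfold sin_approx; cbn [sum_f_R0]; unfold sin_term. rewrite !INR_IZR_INZ.
 repeat match goal with |- context [Z.of_nat ?n] => let v := eval vm_compute in (Z.of_nat n) in change (Z.of_nat n) with v end.
 simpl pow. field. Qed.

Lemma sin_taylor (a : R) : 0 <= a <= PI ->
  exists e, 0 <= e <= a^9/362880 /\ sin a = a - a^3/6 + a^5/120 - a^7/5040 + e.
Proof.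
  intros Ha. destruct (sin_bound a 1 (proj1 Ha) (proj2 Ha)) as [L U].
  replace (2 * 1 + 1)%nat with 3%nat in L by reflexivity.
  replace (2 * (1 + 1))%nat with 4%nat in U by reflexivity.
  rewrite sin_approx3 in L; rewrite sin_approx4 in U.
  exists (sin a - (a - a^3/6 + a^5/120 - a^7/5040)). split; [lra|ring].
Qed.

Lemma part_i_b : exists K delta : R, 0 < delta /\
      forall tt : R, 0 < tt < delta ->
        Rabs (F_uniform tt - (1 - tt ^ 4 / 80)) <= K * tt ^ 6.
Proof.
  exists 1, 1. split; [lra|]. intros t Ht.
  assert (HPI := PI2_1).
  destruct (sin_taylor t) as [e1 [He1 Hs1]]; [lra|].
  destruct (sin_taylor (2*t)) as [e2 [He2 Hs2]]; [lra|].
  assert (Hs2pos : 0 <= sin (2 * t)) by (apply sin_ge_0; lra).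
  unfold F_uniform. set (D := 6 * t + sin (2 * t)).
  assert (HD : 6 * t <= D) by (unfold D; lra).
  set (num := 320 * sin t - (40 - t^4) * D).
  assert (Eq : 1 / 2 + 4 * sin t / D - (1 - t ^ 4 / 80) = num / (80 * D))
    by (unfold num; field; lra).
  rewrite Eq.
  assert (Hnum : num = t^7 * (-(8/21) + 4 * t^2/15 - 8 * t^4/315) + 320 * e1 - (40 - t^4) * e2).
  { unfold num, D. rewrite Hs1, Hs2. field. }
  assert (t2 : t^2 <= 1) by nra. assert (t2p : 0 <= t^2) by nra.
  assert (t4 : t^4 <= 1) by nra. assert (t4p : 0 <= t^4) by nra.
  assert (t7p : 0 < t^7) by (apply pow_lt; lra).
  assert (t9 : t^9 <= t^7) by (replace (t^9) with (t^7 * t^2) by ring; nra).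
  assert (Hb : Rabs num <= t^7).
  { rewrite Hnum. apply Rabs_le.
    assert (e2b : e2 <= 512 * t^7 / 362880) by (replace ((2*t)^9) with (512 * t^9) in He2 by ring; lra).
    assert (e1b : e1 <= t^7 / 362880) by lra.
    assert (q1 : -(8/21) - 8/315 <= -(8/21) + 4 * t^2/15 - 8 * t^4/315) by lra.
    assert (q2 : -(8/21) + 4 * t^2/15 - 8 * t^4/315 <= -(8/21) + 4/15) by lra.
    assert (r1 : 0 <= (40 - t^4) * e2 <= 40 * (512 * t^7 / 362880)) by (split; nra).
    split; nra. }
  rewrite Rabs_div by lra. rewrite (Rabs_right (80 * D)) by lra.
  unfold Rdiv.
  apply Rle_trans with (t^7 * /(80*D)).
  { apply Rmult_le_compat_r; [left; apply Rinv_0_lt_compat; lra | exact Hb]. }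
  apply (Rmult_le_reg_r (80*D)); [lra|].
  rewrite Rmult_assoc, Rinv_l by lra.
  assert (t^7 = t^6 * t) by ring.
  assert (0 < t^6) by (apply pow_lt; lra).
  nra.
Qed.




Definition W (n : nat) : R := RInt (fun x => cos x ^ n) (-PI) PI.

Lemma W_is (n : nat) : is_RInt (fun x => cos x ^ n) (-PI) PI (W n).
Proof. unfold W. apply (RInt_correct (V:=R_CompleteNormedModule)), ex_RInt_continuous. intros z _. revert z; cont_tac. Qed.

Lemma W_rec (n : nat) : INR (n + 2) * W (n + 2) = INR (n + 1) * W n.
Proof.
  assert (H := is_RInt_derive (fun x => sin x * cos x ^ (n+1))
     (fun x => INR (n+2) * cos x ^ (n+2) - INR (n+1) * cos x ^ n) (-PI) PI).
  assert (H2 : forall x, is_derive (fun x => sin x * cos x ^ (n+1)) x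
     (INR (n+2) * cos x ^ (n+2) - INR (n+1) * cos x ^ n)).
  { intros x. auto_derive; auto.
    replace (Init.Nat.pred (n + 1)) with n by lia.
    rewrite !pow_add, !plus_INR. simpl (INR 1); simpl (INR 2).
    pose proof (sin2_cos2 x) as E; unfold Rsqr in E.
    replace (sin x * (1 * - sin x * ((INR n + 1) * cos x ^ n))) with (-(sin x * sin x) * ((INR n + 1) * cos x ^ n)) by ring.
    replace (sin x * sin x) with (1 - cos x * cos x) by lra. ring. }
  assert (H3 := H (fun x _ => H2 x) ltac:(intros x _; revert x; cont_tac)).
  simpl in H3. rewrite sin_PI, sin_neg, sin_PI in H3.
  assert (H4 := is_RInt_minus _ _ _ _ _ _ (is_RInt_scal _ _ _ (INR (n+2)) _ (W_is (n+2))) (is_RInt_scal _ _ _ (INR (n+1)) _ (W_is n))).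
  assert (H5 : is_RInt (fun x => INR (n+2) * cos x ^ (n+2) - INR (n+1) * cos x ^ n) (-PI) PI
     (minus (scal (INR (n + 2)) (W (n + 2))) (scal (INR (n + 1)) (W n)))).
  { eapply is_RInt_ext; [|exact H4]. intros; reflexivity. }
  assert (E := is_RInt_unique _ _ _ _ H3). rewrite (is_RInt_unique _ _ _ _ H5) in E.
  unfold minus, plus, opp, scal in E; simpl in E; unfold mult in E; simpl in E. lra.
Qed.

Lemma W0 : W 0 = 2 * PI.
Proof.
  unfold W. simpl. rewrite (RInt_const (V:=R_CompleteNormedModule)). unfold scal; simpl; unfold mult; simpl. ring.
Qed.

Lemma W1 : W 1 = 0.
Proof.
  unfold W. apply is_RInt_unique.
  replace 0 with (minus (sin PI) (sin (-PI))) by (rewrite sin_neg, sin_PI; unfold minus, plus, opp; simpl; ring).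
  apply (is_RInt_derive sin). intros; auto_derive; auto; ring.
  intros z _; revert z; cont_tac.
Qed.


Lemma W_odd (k : nat) : W (2 * k + 1) = 0.
Proof.
  induction k as [|k IH]. { simpl. apply W1. }
  replace (2 * S k + 1)%nat with ((2 * k + 1) + 2)%nat by lia.
  pose proof (W_rec (2 * k + 1)) as E. rewrite IH, Rmult_0_r in E.
  assert (0 < INR (2 * k + 1 + 2)) by (apply lt_0_INR; lia).
  apply (Rmult_eq_reg_l (INR (2 * k + 1 + 2))); lra.
Qed.

Lemma INR_fact_pos n : 0 < INR (fact n).
Proof. apply lt_0_INR, lt_O_fact. Qed.

Lemma W_even (k : nat) : W (2 * k) / INR (fact (2 * k)) = 2 * PI / (4 ^ k * INR (fact k) ^ 2).
Proof.
  induction k as [|k IH]. { simpl. rewrite W0. field. }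
  replace (2 * S k)%nat with ((2 * k) + 2)%nat by lia.
  pose proof (W_rec (2 * k)) as E.
  replace (fact (2 * k + 2)) with ((2 * k + 2) * ((2 * k + 1) * fact (2 * k)))%nat
    by (replace (2 * k + 2)%nat with (S (S (2 * k))) by lia; simpl; lia).
  rewrite fact_simpl.
  rewrite !mult_INR.
  assert (F1 := INR_fact_pos (2*k)). assert (F2 := INR_fact_pos k).
  rewrite !plus_INR, !mult_INR in *. rewrite S_INR. change (INR 2) with (1+1) in *. change (INR 1) with 1 in *. replace (1+1) with 2 in * by ring.
  assert (Hk := pos_INR k).
  assert (W (2*k+2) = (2 * INR k + 1) / (2 * INR k + 2) * W (2 * k)).
  { apply (Rmult_eq_reg_l (2 * INR k + 2)); [|lra]. rewrite E. field. lra. }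
  rewrite H.
  replace ((2 * INR k + 1) / (2 * INR k + 2) * W (2 * k) /
    ((2 * INR k + 2) * ((2 * INR k + 1) * INR (fact (2 * k)))))
    with ((W (2 * k) / INR (fact (2 * k))) / ((2 * INR k + 2) * (2 * INR k + 2))) by (field; lra).
  rewrite IH, S_INR. simpl pow. assert (0 < 4 ^ k) by (apply pow_lt; lra). field. repeat split; lra.
Qed.


Lemma fact_mult_le n k : (fact n * fact k <= fact (n + k))%nat.
Proof.
  induction k as [|k IH]. { simpl. rewrite Nat.add_0_r. lia. }
  replace (n + S k)%nat with (S (n + k)) by lia.
  rewrite !fact_simpl. nia.
Qed.

Lemma exp_series (x : R) : is_series (fun k => x ^ k / INR (fact k)) (exp x).
Proof.
  eapply is_series_ext; [|apply (is_exp_Reals x)].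
  intros n. rewrite pow_n_pow. reflexivity.
Qed.

Lemma exp_tail (x : R) (N : nat) :
  Rabs (exp x - sum_f_R0 (fun n => x^n / INR (fact n)) N) <=
  Rabs x ^ (S N) / INR (fact (S N)) * exp (Rabs x).
Proof.
  set (a := fun k => x ^ k / INR (fact k)).
  set (l := exp x - sum_f_R0 a N).
  assert (Ht : is_series (fun k => a (S N + k)%nat) l).
  { apply is_series_incr_n; [lia|]. simpl pred.
    assert (E : plus l (sum_n a N) = exp x).
    { unfold l, plus; simpl. rewrite sum_n_Reals. ring. }
    pose proof (exp_series x) as H. rewrite <- E in H. exact H. }
  set (c := Rabs x ^ (S N) / INR (fact (S N))).
  set (b := fun k => c * (Rabs x ^ k / INR (fact k))).
  assert (Hb : is_series b (c * exp (Rabs x))).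
  { unfold b. apply (is_series_scal_l c _ _ (exp_series (Rabs x))). }
  assert (Hle : forall k, 0 <= Rabs (a (S N + k)%nat) <= b k).
  { intros k. split; [apply Rabs_pos|].
    unfold a, b, c. rewrite Rabs_div, <- RPow_abs, pow_add.
    2: { apply not_0_INR, fact_neq_0. }
    rewrite (Rabs_right (INR _)) by (apply Rle_ge, pos_INR).
    assert (F1 : 0 < INR (fact (S N))) by (apply lt_0_INR, lt_O_fact).
    assert (F2 : 0 < INR (fact k)) by (apply lt_0_INR, lt_O_fact).
    assert (F3 : INR (fact (S N)) * INR (fact k) <= INR (fact (S N + k)))
      by (rewrite <- mult_INR; apply le_INR, fact_mult_le).
    assert (P1 : 0 <= Rabs x ^ S N) by (apply pow_le, Rabs_pos).
    assert (P2 : 0 <= Rabs x ^ k) by (apply pow_le, Rabs_pos).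
    unfold Rdiv.
    replace (Rabs x ^ S N * / INR (fact (S N)) * (Rabs x ^ k * / INR (fact k)))
      with (Rabs x ^ S N * Rabs x ^ k * / (INR (fact (S N)) * INR (fact k))) by (field; lra).
    apply Rmult_le_compat_l; [nra|].
    apply Rinv_le_contravar; nra. }
  assert (Exb : ex_series b) by (eexists; exact Hb).
  assert (Exa : ex_series (fun k => Rabs (a (S N + k)%nat))).
  { apply (ex_series_le (K:=R_AbsRing) (V:=R_CompleteNormedModule) _ b); [|exact Exb]. intros k. unfold norm; simpl.
    rewrite Rabs_Rabsolu. apply Hle. }
  rewrite <- (is_series_unique _ _ Ht).
  eapply Rle_trans; [apply Series_Rabs; exact Exa|].
  rewrite <- (is_series_unique _ _ Hb).
  apply Series_le; [exact Hle| exact Exb].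
Qed.


Definition Jm (m : nat) (k : R) : R := RInt (fun x => exp (k * cos x) * cos x ^ m) (-PI) PI.

Lemma Jm_is m k : is_RInt (fun x => exp (k * cos x) * cos x ^ m) (-PI) PI (Jm m k).
Proof. unfold Jm. apply (RInt_correct (V:=R_CompleteNormedModule)), ex_RInt_continuous. intros z _. revert z; cont_tac. Qed.

Definition Sfun (k : R) (N : nat) (x : R) : R := sum_f_R0 (fun n => (k * cos x)^n / INR (fact n)) N.

Lemma Sfun_int (m : nat) (k : R) (N : nat) :
  is_RInt (fun x => Sfun k N x * cos x ^ m) (-PI) PI
    (sum_f_R0 (fun n => k^n / INR (fact n) * W (n + m)) N).
Proof.
  assert (Hterm : forall n, is_RInt (fun x => (k * cos x)^n / INR (fact n) * cos x ^ m) (-PI) PI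
                         (k^n / INR (fact n) * W (n + m))).
  { intros n. eapply is_RInt_ext.
    2: { apply (is_RInt_scal _ _ _ (k^n / INR (fact n)) _ (W_is (n + m))). }
    intros x _. unfold scal; simpl; unfold mult; simpl. rewrite Rpow_mult_distr, pow_add. field.
    apply not_0_INR, fact_neq_0. }
  induction N as [|N IH].
  - eapply is_RInt_ext; [|apply (Hterm 0%nat)]. intros x _. unfold Sfun. simpl. reflexivity.
  - eapply is_RInt_ext; [|apply (is_RInt_plus _ _ _ _ _ _ IH (Hterm (S N)))].
    intros x _. unfold Sfun; simpl sum_f_R0. unfold plus; simpl. ring.
Qed.

Lemma exp_tail_bound (k c : R) (N : nat) : Rabs c <= 1 ->
  Rabs (exp (k * c) - sum_f_R0 (fun n => (k * c)^n / INR (fact n)) N) <=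
  Rabs k ^ (S N) / INR (fact (S N)) * exp (Rabs k).
Proof.
  intros Hc. eapply Rle_trans; [apply exp_tail|].
  assert (H1 : Rabs (k * c) <= Rabs k) by (rewrite Rabs_mult; pose proof (Rabs_pos k); pose proof (Rabs_pos c); nra).
  assert (F : 0 < INR (fact (S N))) by (apply lt_0_INR, lt_O_fact).
  apply Rmult_le_compat.
  - apply Rmult_le_pos; [apply pow_le, Rabs_pos| left; apply Rinv_0_lt_compat; lra].
  - left; apply exp_pos.
  - unfold Rdiv. apply Rmult_le_compat_r; [left; apply Rinv_0_lt_compat; lra|].
    apply pow_incr. split; [apply Rabs_pos| exact H1].
  - destruct (Req_dec (Rabs (k * c)) (Rabs k)) as [E|E]; [rewrite E; lra|].
    left; apply exp_increasing; lra.
Qed.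

Lemma Jm_series (m : nat) (k : R) :
  is_series (fun n => k^n / INR (fact n) * W (n + m)) (Jm m k).
Proof.
  set (e := fun N : nat => 2 * PI * (Rabs k ^ (S N) / INR (fact (S N)) * exp (Rabs k))).
  assert (He : is_lim_seq e 0).
  { unfold e. replace (Finite 0) with (Rbar_mult (2 * PI) 0) by (simpl; f_equal; ring).
    apply is_lim_seq_scal_l.
    replace (Finite 0) with (Rbar_mult 0 (exp (Rabs k))) by (simpl; f_equal; ring).
    apply (is_lim_seq_scal_r (fun N => Rabs k ^ (S N) / INR (fact (S N)))).
    apply (is_lim_seq_incr_1 (fun N => Rabs k ^ N / INR (fact N))).
    apply ex_series_lim_0. eexists; apply exp_series. }
  assert (Hb : forall N, Rabs (Jm m k - sum_f_R0 (fun n => k^n / INR (fact n) * W (n + m)) N) <= e N).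
  { intros N.
    assert (Hd := is_RInt_minus _ _ _ _ _ _ (Jm_is m k) (Sfun_int m k N)).
    assert (Hd' : is_RInt (fun x => (exp (k * cos x) - Sfun k N x) * cos x ^ m) (-PI) PI
                    (Jm m k - sum_f_R0 (fun n => k^n / INR (fact n) * W (n + m)) N)).
    { eapply is_RInt_ext; [|exact Hd]. intros x _. unfold minus, plus, opp; simpl. ring. }
    rewrite <- (is_RInt_unique _ _ _ _ Hd').
    assert (PIpos := PI_RGT_0).
    eapply Rle_trans; [apply abs_RInt_le_const with (M := Rabs k ^ (S N) / INR (fact (S N)) * exp (Rabs k))|].
    - lra.
    - eexists; exact Hd'.
    - intros t _. rewrite Rabs_mult. unfold Sfun.
      assert (Hc := COS_bound t).
      assert (Hc' : Rabs (cos t) <= 1) by (apply Rabs_le; lra).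
      assert (Hp : Rabs (cos t ^ m) <= 1).
      { rewrite <- RPow_abs. rewrite <- (pow1 m). apply pow_incr. split; [apply Rabs_pos|exact Hc']. }
      assert (Ht := exp_tail_bound k (cos t) N Hc').
      assert (0 <= Rabs k ^ S N / INR (fact (S N)) * exp (Rabs k)).
      { apply Rmult_le_pos; [|left; apply exp_pos]. apply Rmult_le_pos; [apply pow_le, Rabs_pos|].
        left; apply Rinv_0_lt_compat, lt_0_INR, lt_O_fact. }
      pose proof (Rabs_pos (cos t ^ m)).
      pose proof (Rabs_pos (exp (k * cos t) - sum_f_R0 (fun n : nat => (k * cos t) ^ n / INR (fact n)) N)).
      nra.
    - unfold e. lra. }
  set (s := fun N => sum_f_R0 (fun n => k^n / INR (fact n) * W (n + m)) N).
  assert (Hl : is_lim_seq s (Jm m k)).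
  { apply is_lim_seq_le_le with (u := fun N => Jm m k - e N) (w := fun N => Jm m k + e N).
    - intros N. specialize (Hb N). apply Rabs_le_between in Hb. unfold s. lra.
    - replace (Finite (Jm m k)) with (Rbar_minus (Jm m k) 0) by (simpl; f_equal; ring).
      apply is_lim_seq_minus'; [apply is_lim_seq_const| exact He].
    - replace (Finite (Jm m k)) with (Rbar_plus (Jm m k) 0) by (simpl; f_equal; ring).
      apply is_lim_seq_plus'; [apply is_lim_seq_const| exact He]. }
  assert (Hl' : is_lim_seq (sum_n (fun n => k^n / INR (fact n) * W (n + m))) (Jm m k)).
  { eapply is_lim_seq_ext; [|exact Hl]. intros N. unfold s. rewrite sum_n_Reals. reflexivity. }
  exact Hl'.
Qed.


Lemma sumS f n : sum_f_R0 f (S n) = sum_f_R0 f n + f (S n).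
Proof. reflexivity. Qed.

Lemma series_pair (b : nat -> R) (l : R) :
  is_series b l -> is_series (fun k => b (2 * k)%nat + b (2 * k + 1)%nat) l.
Proof.
  intros H.
  assert (E : forall K, sum_n (fun k => b (2 * k)%nat + b (2 * k + 1)%nat) K = sum_n b (2 * K + 1)).
  { intros K. rewrite !sum_n_Reals. induction K as [|K IH].
    - simpl. ring.
    - replace (2 * S K + 1)%nat with (S (S (2 * K + 1))) by lia.
      rewrite !sumS, IH.
      replace (S (2 * K + 1)) with (2 * S K)%nat by lia.
      assert (EE : S (2 * S K) = (2 * S K + 1)%nat) by lia. rewrite EE. lra. }
  assert (Hl : is_lim_seq (sum_n b) l) by exact H.
  assert (Hs := is_lim_seq_subseq _ _ (fun K => 2 * K + 1)%nat
                  (eventually_subseq (fun K => 2 * K + 1)%nat ltac:(intros; cbv beta; lia)) Hl).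
  assert (Hs' : is_lim_seq (sum_n (fun k => b (2 * k)%nat + b (2 * k + 1)%nat)) l).
  { eapply is_lim_seq_ext; [|exact Hs]. intros K; simpl. rewrite E. reflexivity. }
  exact Hs'.
Qed.

Lemma half_pow (k : R) (j : nat) : (k / 2) ^ (2 * j) = k ^ (2 * j) / 4 ^ j.
Proof.
  rewrite !pow_mult. replace ((k / 2) ^ 2) with (k ^ 2 * / 4) by field.
  rewrite Rpow_mult_distr, pow_inv. field. apply pow_nonzero; lra.
Qed.

Lemma Bessel0_series (k : R) :
  is_series (fun j => (k / 2) ^ (2 * j + 0) / (INR (fact j) * INR (fact (j + 0)))) (Jm 0 k / (2 * PI)).
Proof.
  assert (PIpos := PI_RGT_0).
  assert (H := series_pair _ _ (Jm_series 0 k)).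
  assert (H2 := is_series_scal_l (/ (2 * PI)) _ _ H).
  eapply is_series_ext; [|replace (Jm 0 k / (2 * PI)) with (scal (/ (2 * PI)) (Jm 0 k)) by
     (unfold scal; simpl; unfold mult; simpl; field; lra); exact H2].
  intros j. unfold scal; simpl; unfold mult; simpl.
  rewrite !Nat.add_0_r. replace (j + j)%nat with (2 * j)%nat by lia. rewrite W_odd, Rmult_0_r, Rplus_0_r.
  assert (E := W_even j).
  assert (F1 := INR_fact_pos (2 * j)). assert (F2 := INR_fact_pos j).
  assert (P4 : 0 < 4 ^ j) by (apply pow_lt; lra).
  replace (k ^ (2 * j) / INR (fact (2 * j)) * W (2 * j)) with (k ^ (2 * j) * (W (2 * j) / INR (fact (2 * j)))) by (field; lra).
  rewrite E, half_pow. field. repeat split; lra.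
Qed.

Lemma Bessel1_series (k : R) :
  is_series (fun j => (k / 2) ^ (2 * j + 1) / (INR (fact j) * INR (fact (j + 1)))) (Jm 1 k / (2 * PI)).
Proof.
  assert (PIpos := PI_RGT_0).
  assert (H := series_pair _ _ (Jm_series 1 k)).
  assert (H2 := is_series_scal_l (/ (2 * PI)) _ _ H).
  eapply is_series_ext; [|replace (Jm 1 k / (2 * PI)) with (scal (/ (2 * PI)) (Jm 1 k)) by
     (unfold scal; simpl; unfold mult; simpl; field; lra); exact H2].
  intros j. unfold scal; simpl; unfold mult; simpl. rewrite ?Nat.add_0_r.
  replace (j + j)%nat with (2 * j)%nat by lia.
  replace (2 * j + 1 + 1)%nat with (2 * S j)%nat by lia.
  rewrite W_odd, Rmult_0_r, Rplus_0_l.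
  assert (E := W_even (S j)).
  replace (fact (2 * S j)) with ((2 * j + 2) * fact (2 * j + 1))%nat in E
    by (replace (2 * S j)%nat with (S (2 * j + 1)) by lia; rewrite fact_simpl; f_equal; lia).
  replace (fact (S j)) with ((j + 1) * fact j)%nat in E by (rewrite fact_simpl; f_equal; lia).
  replace (fact (j + 1)) with ((j + 1) * fact j)%nat by (rewrite Nat.add_1_r, fact_simpl; f_equal; lia).
  rewrite !mult_INR in *. rewrite !plus_INR in *. simpl (INR 2) in *. simpl (INR 1) in *.
  assert (F1 := INR_fact_pos (2 * j + 1)). assert (F2 := INR_fact_pos j).
  assert (P4 : 0 < 4 ^ j) by (apply pow_lt; lra). assert (Hj := pos_INR j).
  assert (EW : W (2 * S j) = 2 * PI / (4 ^ S j * ((INR j + 1) * INR (fact j)) ^ 2) * ((2 * INR j + 2) * INR (fact (2 * j + 1)))).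
  { replace (2 * INR j + 2) with (INR (2*j) + (1+1)) by (rewrite mult_INR; simpl; ring).
    rewrite <- E. field. assert (0 <= INR (2*j)) by apply pos_INR. split; lra. }
  rewrite EW. rewrite !pow_add, half_pow. simpl pow. field. repeat split; lra.
Qed.


Lemma series_ge_first (a : nat -> R) (l : R) :
  is_series a l -> (forall n, 0 <= a n) -> a 0%nat <= l.
Proof.
  intros H Hp.
  assert (Hl : is_lim_seq (sum_n a) l) by exact H.
  assert (Hc : is_lim_seq (fun _ : nat => a 0%nat) (a 0%nat)) by apply is_lim_seq_const.
  assert (Hle : forall n, a 0%nat <= sum_n a n).
  { intros n. rewrite sum_n_Reals. induction n as [|n IH]; simpl; [lra|]. specialize (Hp (S n)). lra. }
  exact (is_lim_seq_le _ _ _ _ Hle Hc Hl).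
Qed.

Lemma BesselI0_eq (k : R) : BesselI 0 k = Jm 0 k / (2 * PI).
Proof. unfold BesselI. apply is_series_unique, Bessel0_series. Qed.
Lemma BesselI1_eq (k : R) : BesselI 1 k = Jm 1 k / (2 * PI).
Proof. unfold BesselI. apply is_series_unique, Bessel1_series. Qed.

Lemma BesselI0_pos (k : R) : 0 < BesselI 0 k.
Proof.
  assert (H := series_ge_first _ _ (Bessel0_series k)).
  rewrite <- BesselI0_eq in H. simpl in H.
  eapply Rlt_le_trans; [|apply H].
  - simpl. lra.
  - intros n. apply Rmult_le_pos.
    + replace (n + (n + 0) + 0)%nat with (2 * n)%nat by lia. rewrite pow_mult. apply pow_le. nra.
    + left; apply Rinv_0_lt_compat. rewrite Nat.add_0_r.
      apply Rmult_lt_0_compat; apply INR_fact_pos.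
Qed.

Lemma BesselI1_pos (k : R) : 0 < k -> 0 < BesselI 1 k.
Proof.
  intros Hk.
  assert (H := series_ge_first _ _ (Bessel1_series k)).
  rewrite <- BesselI1_eq in H. simpl in H.
  eapply Rlt_le_trans; [|apply H].
  - simpl. lra.
  - intros n. apply Rmult_le_pos.
    + apply pow_le. lra.
    + left; apply Rinv_0_lt_compat.
      apply Rmult_lt_0_compat; apply INR_fact_pos.
Qed.


Definition Mm (j : nat) (k : R) : R := RInt (fun x => (1 - cos x) ^ j * exp (k * cos x)) (-PI) PI.

Lemma Mm_is j k : is_RInt (fun x => (1 - cos x) ^ j * exp (k * cos x)) (-PI) PI (Mm j k).
Proof. unfold Mm. apply (RInt_correct (V:=R_CompleteNormedModule)), ex_RInt_continuous. intros z _. revert z; cont_tac. Qed.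

Lemma lin3 (f1 f2 f3 : R -> R) (a1 a2 a3 I1 I2 I3 a b : R) :
  is_RInt f1 a b I1 -> is_RInt f2 a b I2 -> is_RInt f3 a b I3 ->
  is_RInt (fun x => a1 * f1 x + a2 * f2 x + a3 * f3 x) a b (a1 * I1 + a2 * I2 + a3 * I3).
Proof.
  intros H1 H2 H3.
  apply (is_RInt_plus (V := R_NormedModule)); [apply (is_RInt_plus (V := R_NormedModule))|];
  apply (is_RInt_scal (V := R_NormedModule)); assumption.
Qed.

Lemma Mm_rec (j : nat) (k : R) :
  (2 * INR j + 1) * Mm j k - (INR j + 1 + 2 * k) * Mm (S j) k + k * Mm (S (S j)) k = 0.
Proof.
  set (u := fun x => 1 - cos x).
  assert (Hd : forall x, is_derive (fun x => sin x * (1 - cos x) ^ j * exp (k * cos x)) x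
     ((2 * INR j + 1) * ((1 - cos x) ^ j * exp (k * cos x))
      + (- (INR j + 1 + 2 * k)) * ((1 - cos x) ^ (S j) * exp (k * cos x))
      + k * ((1 - cos x) ^ (S (S j)) * exp (k * cos x)))).
  { intros x. auto_derive; auto.
    pose proof (sin2_cos2 x) as E; unfold Rsqr in E.
    unfold Rminus in *.
    destruct j as [|j].
    - simpl. set (ex := exp (k * cos x)). nsatz.
    - simpl Init.Nat.pred. rewrite S_INR. simpl pow.
      set (v := (1 + - cos x) ^ j). set (ex := exp (k * cos x)). nsatz. }
  assert (H1 := is_RInt_derive _ _ (-PI) PI (fun x _ => Hd x) ltac:(intros z _; revert z; cont_tac)).
  assert (H2 := lin3 _ _ _ (2 * INR j + 1) (- (INR j + 1 + 2 * k)) k _ _ _ (-PI) PI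
                 (Mm_is j k) (Mm_is (S j) k) (Mm_is (S (S j)) k)).
  cbv beta in H2. apply (is_RInt_unique (V:=R_CompleteNormedModule)) in H1. apply (is_RInt_unique (V:=R_CompleteNormedModule)) in H2. rewrite H2 in H1.
  rewrite sin_neg, sin_PI in H1. unfold minus, plus, opp in H1; simpl in H1. lra.
Qed.

Lemma exp_ge_pow4 (y : R) : 0 <= y -> (y / 4) ^ 4 <= exp y.
Proof.
  intros Hy.
  replace y with (y/4 + y/4 + y/4 + y/4) at 2 by field.
  rewrite !exp_plus.
  assert (H : y / 4 <= exp (y / 4)).
  { destruct (Req_dec y 0) as [E|E].
    - subst. replace (0/4) with 0 by field. rewrite exp_0. lra.
    - left. apply Rlt_trans with (1 + y/4); [lra|]. apply exp_ineq1. lra. }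
  assert (0 <= y / 4) by lra.
  replace (exp (y / 4) * exp (y / 4) * exp (y / 4) * exp (y / 4)) with (exp (y / 4) ^ 4) by ring.
  apply pow_incr; lra.
Qed.

Lemma M4_bound (k : R) : 0 < k -> Mm 4 k <= 2 * PI * (256 * exp k / k ^ 4).
Proof.
  intros Hk. assert (PIpos := PI_RGT_0).
  assert (Hc := is_RInt_const (V := R_NormedModule) (-PI) PI (256 * exp k / k ^ 4)).
  assert (Hk4 : 0 < k ^ 4) by (apply pow_lt; lra).
  assert (E : scal (PI - - PI) (256 * exp k / k ^ 4) = 2 * PI * (256 * exp k / k ^ 4))
    by (unfold scal; simpl; unfold mult; simpl; ring).
  rewrite <- E.
  apply (is_RInt_le _ _ (-PI) PI _ _ ltac:(lra) (Mm_is 4 k) Hc).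
  intros x _.
  set (u := 1 - cos x).
  assert (Hu : 0 <= u) by (unfold u; pose proof (COS_bound x); lra).
  assert (H1 := exp_ge_pow4 (k * u) ltac:(nra)).
  assert (H2 : exp (k * u) * exp (k * cos x) = exp k)
    by (rewrite <- exp_plus; f_equal; unfold u; ring).
  apply (Rmult_le_reg_r (k ^ 4)); [lra|].
  replace (256 * exp k / k ^ 4 * k ^ 4) with (256 * exp k) by (field; lra).
  assert (0 < exp (k * cos x)) by apply exp_pos.
  replace (u ^ 4 * exp (k * cos x) * k ^ 4) with (256 * ((k * u / 4) ^ 4 * exp (k * cos x))) by field.
  apply Rmult_le_compat_l; [lra|]. rewrite <- H2. apply Rmult_le_compat_r; lra.
Qed.

Lemma M0_lower (k : R) : 0 < k -> (exp k - exp (-k)) / k <= Mm 0 k.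
Proof.
  intros Hk. assert (PIpos := PI_RGT_0).
  assert (Hex : forall a b, ex_RInt (fun x => (1 - cos x) ^ 0 * exp (k * cos x)) a b).
  { intros a b. apply (ex_RInt_continuous (V:=R_CompleteNormedModule)). intros z _. revert z; cont_tac. }
  unfold Mm. rewrite <- (RInt_Chasles (V:=R_CompleteNormedModule) _ (-PI) 0 PI (Hex _ _) (Hex _ _)).
  assert (P1 : 0 <= RInt (fun x => (1 - cos x) ^ 0 * exp (k * cos x)) (-PI) 0).
  { apply (is_RInt_ge_0 (fun x => (1 - cos x) ^ 0 * exp (k * cos x)) (-PI) 0); [lra| apply (RInt_correct (V:=R_CompleteNormedModule)), Hex|].
    intros x _. simpl. rewrite Rmult_1_l. left; apply exp_pos. }
  assert (Hs : is_RInt (fun x => exp (k * cos x) * sin x) 0 PI ((exp k - exp (-k)) / k)).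
  { replace ((exp k - exp (-k)) / k) with (minus (- exp (k * cos PI) / k) (- exp (k * cos 0) / k))
      by (rewrite cos_PI, cos_0; unfold minus, plus, opp; simpl; replace (k * -1) with (-k) by ring;
          rewrite Rmult_1_r; field; lra).
    apply (is_RInt_derive (fun x => - exp (k * cos x) / k)).
    - intros x _. auto_derive; auto. field. lra.
    - intros z _; revert z; cont_tac. }
  assert (P2 : (exp k - exp (-k)) / k <= RInt (fun x => (1 - cos x) ^ 0 * exp (k * cos x)) 0 PI).
  { apply (is_RInt_le _ _ 0 PI _ _ ltac:(lra) Hs (RInt_correct (V:=R_CompleteNormedModule) _ _ _ (Hex _ _))).
    intros x Hx. simpl. rewrite Rmult_1_l.
    assert (sin x <= 1) by (pose proof (SIN_bound x); lra).
    assert (0 < exp (k * cos x)) by apply exp_pos. nra. }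
  unfold plus; simpl in P1, P2 |- *. lra.
Qed.


Lemma Jm0_Mm k : Jm 0 k = Mm 0 k.
Proof.
  apply (is_RInt_unique (V:=R_CompleteNormedModule)).
  eapply is_RInt_ext; [|apply Mm_is]. intros x _. simpl. ring.
Qed.

Lemma Jm1_Mm k : Jm 1 k = Mm 0 k - Mm 1 k.
Proof.
  apply (is_RInt_unique (V:=R_CompleteNormedModule)).
  eapply is_RInt_ext; [|apply (is_RInt_minus _ _ _ _ _ _ (Mm_is 0 k) (Mm_is 1 k))].
  intros x _. unfold minus, plus, opp; simpl. ring.
Qed.

Lemma part_ii_b : exists K delta : R, 0 < delta /\
      forall sigma : R, 0 < sigma < delta ->
        Rabs (F_vonMises sigma - (1 - 3 / 16 * sigma ^ 4)) <= K * sigma ^ 6.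
Proof.
  exists 1000, 1. split; [lra|]. intros sigma Hs.
  set (t := sigma ^ 2).
  assert (Ht : 0 < t < 1) by (unfold t; split; nra).
  set (k := / sigma ^ 2).
  assert (Hkt : k = / t) by reflexivity.
  assert (Hkinv : / k = t) by (rewrite Hkt, Rinv_inv; reflexivity).
  assert (Hk : 1 < k) by (rewrite Hkt; rewrite <- Rinv_1; apply Rinv_lt_contravar; lra).
  assert (PIpos := PI_RGT_0). assert (PI4 := PI_4).
  set (M0 := Mm 0 k). set (M1 := Mm 1 k). set (M2 := Mm 2 k). set (M3 := Mm 3 k). set (M4 := Mm 4 k).
  assert (E0 := Mm_rec 0 k). assert (E1 := Mm_rec 1 k). assert (E2 := Mm_rec 2 k).
  fold M0 M1 M2 M3 M4 in E0, E1, E2. simpl INR in E0, E1, E2.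
  assert (L0 := M0_lower k (ltac:(lra))). fold M0 in L0.
  assert (ek : 2 <= exp k) by (pose proof (exp_ineq1 k ltac:(lra)); lra).
  assert (emk : exp (-k) * exp k = 1) by (rewrite <- exp_plus; replace (-k + k) with 0 by ring; apply exp_0).
  assert (L0' : exp k * t / 2 <= M0).
  { eapply Rle_trans; [|exact L0]. unfold Rdiv. rewrite Hkinv.
    assert (exp (-k) <= exp k / 2) by nra. nra. }
  assert (M0pos : 0 < M0) by (assert (0 < exp k) by apply exp_pos; nra).
  assert (U4 := M4_bound k (ltac:(lra))). fold M4 in U4.
  assert (M4pos : 0 <= M4).
  { apply (is_RInt_ge_0 _ (-PI) PI _ ltac:(lra) (Mm_is 4 k)). intros x _.
    apply Rmult_le_pos; [apply pow_le; pose proof (COS_bound x); lra| left; apply exp_pos]. }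
  assert (U4' : M4 <= 4096 * t ^ 3 * M0).
  { assert (k4 : k ^ 4 = / t ^ 4) by (rewrite Hkt; rewrite pow_inv; reflexivity).
    assert (0 < t ^ 4) by (apply pow_lt; lra).
    rewrite k4 in U4. assert (EE : 256 * exp k / / t ^ 4 = 256 * exp k * t ^ 4). { field. lra. } rewrite EE in U4.
    assert (0 < exp k) by apply exp_pos.
    assert (0 < t^3) by (apply pow_lt; lra).
    apply Rle_trans with (2 * PI * (256 * exp k * t ^ 4)); [exact U4|].
    replace (2 * PI * (256 * exp k * t ^ 4)) with (1024 * PI * t ^ 3 * (exp k * t / 2)) by field.
    apply Rle_trans with (1024 * PI * t ^ 3 * M0).
    - apply Rmult_le_compat_l; [|exact L0']. assert (0 < PI * t^3) by nra. nra.
    - assert (0 < t ^ 3 * M0) by nra. nra. }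
  assert (E0' : t*M0 - (t+2)*M1 + M2 = 0).
  { replace (t*M0 - (t+2)*M1 + M2) with (t * ((2*0+1)*M0 - (0+1+2*k)*M1 + k*M2)) by (rewrite Hkt; field; lra).
    rewrite E0; ring. }
  assert (E1' : 3*t*M1 - (2*t+2)*M2 + M3 = 0).
  { replace (3*t*M1 - (2*t+2)*M2 + M3) with (t * ((2*1+1)*M1 - (1+1+2*k)*M2 + k*M3)) by (rewrite Hkt; field; lra).
    rewrite E1; ring. }
  assert (E2' : 5*t*M2 - (3*t+2)*M3 + M4 = 0).
  { replace (5*t*M2 - (3*t+2)*M3 + M4) with (t * ((2*(1+1)+1)*M2 - (1+1+1+2*k)*M3 + k*M4)) by (rewrite Hkt; field; lra).
    rewrite E2; ring. }
  set (D := 8 + 8*t + 8*t^2 + 6*t^3).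
  set (Q := 4*t + 5*t^2 + 6*t^3).
  assert (HD : 0 < D) by (unfold D; nra).
  assert (HD' : 8 + 8*t + 8*t^2 + 6*t^3 <> 0) by (unfold D in HD; lra).
  assert (HM1 : M1 = (M4 + Q * M0) / D).
  { assert (M2e : M2 = (t+2)*M1 - t*M0) by lra.
    assert (M3e : M3 = (2*t+2)*M2 - 3*t*M1) by lra.
    rewrite M2e in M3e. rewrite M3e, M2e in E2'.
    apply (Rmult_eq_reg_r D); [|lra]. unfold Rdiv. rewrite Rmult_assoc, Rinv_l by lra.
    unfold D, Q. nra. }
  assert (J1pos : 0 < M0 - M1).
  { assert (H := BesselI1_pos k ltac:(lra)). rewrite BesselI1_eq, Jm1_Mm in H. fold M0 M1 in H.
    apply (Rmult_lt_reg_r (/ (2 * PI))); [apply Rinv_0_lt_compat; lra|]. lra. }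
  assert (M1pos : 0 <= M1).
  { apply (is_RInt_ge_0 _ (-PI) PI _ ltac:(lra) (Mm_is 1 k)). intros x _.
    apply Rmult_le_pos; [apply pow_le; pose proof (COS_bound x); lra| left; apply exp_pos]. }
  unfold F_vonMises. rewrite BesselI0_eq, BesselI1_eq, Jm0_Mm, Jm1_Mm. fold k M0 M1.
  replace (sigma ^ 4) with (t ^ 2) by (unfold t; ring).
  replace (sigma ^ 6) with (t ^ 3) by (unfold t; ring).
  fold t.
  set (Num := (-48*t^3 + 36*t^4 + 27*t^5)*M0 - (16 + 8*t - 3*t^3)*M4).
  set (Den := 16 * ((16 + 8*t + 12*t^2 + 9*t^3)*M0 + t * M4)).
  assert (HDen : 256 * M0 <= Den) by (unfold Den; assert (0 <= t * M4) by nra; nra).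
  assert (JJ : 0 < (8 + 4*t + 3*t^2) * M0 - M4).
  { rewrite HM1 in J1pos. unfold Q, D in J1pos.
    apply (Rmult_lt_reg_r (/ D)); [apply Rinv_0_lt_compat; lra|]. rewrite Rmult_0_l.
    replace (((8 + 4*t + 3*t^2) * M0 - M4) * / D) with (M0 - (M4 + (4*t + 5*t^2 + 6*t^3) * M0) / (8 + 8*t + 8*t^2 + 6*t^3)) by (unfold D; field; exact HD').
    exact J1pos. }
  assert (Eq : 1 / 2 + / (2 * (M0 / (2 * PI)) / ((M0 - M1) / (2 * PI)) - t) - (1 - 3 / 16 * t ^ 2)
               = Num / Den).
  { rewrite HM1. unfold Num, Den, Q, D. field.
    repeat split; try lra; try nra. }
  rewrite Eq.
  assert (HDpos : 0 < Den) by lra.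
  assert (t3 : 0 < t ^ 3) by (apply pow_lt; lra).
  assert (t4 : t ^ 4 <= t ^ 3) by (replace (t^4) with (t^3 * t) by ring; nra).
  assert (t5 : t ^ 5 <= t ^ 3) by (replace (t^5) with (t^3 * (t * t)) by ring; nra).
  assert (t4p : 0 <= t ^ 4) by (apply pow_le; lra).
  assert (t5p : 0 <= t ^ 5) by (apply pow_le; lra).
  assert (c1 : 0 <= 16 + 8*t - 3*t^3 <= 24) by (split; nra).
  assert (HN : Rabs Num <= 110703 * t^3 * M0).
  { unfold Num. apply Rabs_le. split.
    - assert ((16 + 8*t - 3*t^3) * M4 <= 24 * (4096 * t^3 * M0)) by nra.
      assert ((-48*t^3 + 36*t^4 + 27*t^5) * M0 >= -48 * t^3 * M0) by nra. nra.
    - assert (0 <= (16 + 8*t - 3*t^3) * M4) by nra.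
      assert ((-48*t^3 + 36*t^4 + 27*t^5) * M0 <= 63 * t^3 * M0) by nra. nra. }
  unfold Rdiv. rewrite Rabs_mult, Rabs_inv, (Rabs_right Den) by lra.
  apply (Rmult_le_reg_r Den); [lra|].
  rewrite Rmult_assoc, Rinv_l, Rmult_1_r by lra.
  assert (0 < t^3 * M0) by nra. nra.
Qed.


Lemma G_sin (k : R) : 0 < k -> is_RInt (fun x => exp (k * cos x) * sin x) (-PI) PI 0.
Proof.
  intros Hk.
  replace 0 with (minus (- exp (k * cos PI) / k) (- exp (k * cos (-PI)) / k))
    by (rewrite cos_neg; unfold minus, plus, opp; simpl; field; lra).
  apply (is_RInt_derive (fun x => - exp (k * cos x) / k)).
  - intros x _. auto_derive; auto. field. lra.
  - intros z _; revert z; cont_tac.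
Qed.

Lemma G_sincos (k : R) : 0 < k -> is_RInt (fun x => exp (k * cos x) * (sin x * cos x)) (-PI) PI 0.
Proof.
  intros Hk.
  replace 0 with (minus (exp (k * cos PI) / k^2 - cos PI * exp (k * cos PI) / k)
                        (exp (k * cos (-PI)) / k^2 - cos (-PI) * exp (k * cos (-PI)) / k))
    by (rewrite cos_neg; unfold minus, plus, opp; simpl; field; lra).
  apply (is_RInt_derive (fun x => exp (k * cos x) / k^2 - cos x * exp (k * cos x) / k)).
  - intros x _. auto_derive; auto. field. lra.
  - intros z _; revert z; cont_tac.
Qed.

Lemma G_sin2 (k : R) : 0 < k -> is_RInt (fun x => exp (k * cos x) * sin x ^ 2) (-PI) PI (Jm 1 k / k).
Proof.
  intros Hk.
  assert (H1 : is_RInt (fun x => exp (k * cos x) * cos x - k * (exp (k * cos x) * sin x ^ 2)) (-PI) PI 0).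
  { replace 0 with (minus (sin PI * exp (k * cos PI)) (sin (-PI) * exp (k * cos (-PI))))
      by (rewrite sin_neg, sin_PI; unfold minus, plus, opp; simpl; ring).
    apply (is_RInt_derive (fun x => sin x * exp (k * cos x))).
    - intros x _. auto_derive; auto. ring.
    - intros z _; revert z; cont_tac. }
  assert (H2 := is_RInt_minus _ _ _ _ _ _ (Jm_is 1 k) H1).
  assert (H3 := is_RInt_scal _ _ _ (/ k) _ H2).
  eapply is_RInt_ext; [|replace (Jm 1 k / k) with (scal (/ k) (minus (Jm 1 k) 0)) by
     (unfold scal, minus, plus, opp; simpl; unfold mult; simpl; field; lra); exact H3].
  intros x _. unfold scal, minus, plus, opp; simpl; unfold mult; simpl. field. lra.
Qed.


Lemma part_ii_a (sigma : R) : 0 < sigma ->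
  (exists rho, is_stationary (p_vonMises sigma) rho) /\
  (forall rho, is_stationary (p_vonMises sigma) rho ->
     m11 rho = RtoC (F_vonMises sigma) /\ m12 rho = RtoC 0 /\ m21 rho = RtoC 0).
Proof.
  intros Hs.
  set (k := / sigma ^ 2).
  assert (Hk : 0 < k) by (unfold k; apply Rinv_0_lt_compat, pow_lt; lra).
  assert (PIpos := PI_RGT_0).
  set (J0 := Jm 0 k). set (J1 := Jm 1 k).
  assert (HI0 := BesselI0_pos k). assert (HI1 := BesselI1_pos k Hk).
  rewrite BesselI0_eq in HI0. rewrite BesselI1_eq in HI1. fold J0 in HI0. fold J1 in HI1.
  assert (J0pos : 0 < J0) by (apply (Rmult_lt_reg_r (/ (2 * PI))); [apply Rinv_0_lt_compat; lra| lra]).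
  assert (J1pos : 0 < J1) by (apply (Rmult_lt_reg_r (/ (2 * PI))); [apply Rinv_0_lt_compat; lra| lra]).
  assert (Ep : forall t, p_vonMises sigma t = / J0 * exp (k * cos t)).
  { intros t. unfold p_vonMises. rewrite BesselI0_eq. fold k J0. field. lra. }
  assert (Sc : forall (w : R -> R) (I : R),
             is_RInt (fun x => exp (k * cos x) * w x) (-PI) PI I ->
             is_RInt (fun x => p_vonMises sigma x * w x) (-PI) PI (I / J0)).
  { intros w I HI. eapply is_RInt_ext; [|replace (I / J0) with (scal (/ J0) I) by
      (unfold scal; simpl; unfold mult; simpl; field; lra); exact (is_RInt_scal _ _ _ _ _ HI)].
    intros x _. rewrite Ep. unfold scal; simpl; unfold mult; simpl. ring. }
  assert (HZ : is_RInt (p_vonMises sigma) (-PI) PI 1).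
  { replace 1 with (J0 / J0) by (field; lra).
    eapply is_RInt_ext; [|apply (Sc (fun _ => 1))].
    - intros; simpl; ring.
    - eapply is_RInt_ext; [|apply (Jm_is 0 k)]. intros; simpl; ring. }
  assert (HA : is_RInt (fun x => p_vonMises sigma x * cos x) (-PI) PI (J1 / J0)).
  { apply (Sc cos). eapply is_RInt_ext; [|apply (Jm_is 1 k)]. intros; simpl; ring. }
  assert (HT : is_RInt (fun x => p_vonMises sigma x * sin x ^ 2) (-PI) PI (1 - (J0 - J1 / k) / J0)).
  { replace (1 - (J0 - J1 / k) / J0) with ((J1 / k) / J0) by (field; lra).
    apply (Sc (fun x => sin x ^ 2)). apply G_sin2; exact Hk. }
  assert (HP : is_RInt (fun x => p_vonMises sigma x * cos x ^ 2) (-PI) PI ((J0 - J1 / k) / J0)).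
  { apply (Sc (fun x => cos x ^ 2)).
    assert (H := is_RInt_minus _ _ _ _ _ _ (Jm_is 0 k) (G_sin2 k Hk)).
    eapply is_RInt_ext; [|exact H]. intros x _. unfold minus, plus, opp; simpl.
    pose proof (sin2_cos2 x) as E; unfold Rsqr in E.
    replace (sin x * (sin x * 1)) with (1 - cos x * cos x) by lra. ring. }
  assert (HQ : is_RInt (fun x => p_vonMises sigma x * (sin x * cos x)) (-PI) PI 0).
  { replace 0 with (0 / J0) by (field; lra). apply (Sc (fun x => sin x * cos x)). apply G_sincos; exact Hk. }
  assert (HS : is_RInt (fun x => p_vonMises sigma x * sin x) (-PI) PI 0).
  { replace 0 with (0 / J0) by (field; lra). apply (Sc sin). apply G_sin; exact Hk. }
  assert (Hp : forall t, -PI < t < PI -> 0 <= p_vonMises sigma t).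
  { intros t _. rewrite Ep. apply Rmult_le_pos; [left; apply Rinv_0_lt_compat; lra| left; apply exp_pos]. }
  destruct (nonneg_conditions _ _ _ _ Hp HZ HP HA) as [C1 [C2 C3]].
  destruct (stat_char _ _ _ _ HZ HP HQ HA HT HS) as [Ex Un]; [lra|lra|lra|].
  split; [exact Ex|].
  intros rho Hr. destruct (Un rho Hr) as [U1 U2]. split; [|exact U2].
  rewrite U1. f_equal. unfold F_vonMises. rewrite BesselI0_eq, BesselI1_eq. fold k J0 J1.
  assert (Hsk : sigma ^ 2 = / k) by (unfold k; field; lra).
  rewrite Hsk.
  assert (0 < 2 * J0 - J1 / k).
  { assert (0 <= (J0 - J1 / k) / J0) by exact C1.
    assert (0 <= J0 - J1 / k).
    { apply (Rmult_le_reg_r (/ J0)); [apply Rinv_0_lt_compat; lra|]. rewrite Rmult_0_l. exact H. }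
    lra. }
  field. repeat split; try lra.
  assert (HH : 0 < (2*J0 - J1/k)*k) by (apply Rmult_lt_0_compat; lra).
  replace ((2*J0 - J1/k)*k) with (J0*2*k - J1) in HH by (field; lra). lra.
Qed.

Theorem mainTheorem10 :
  (* (i) uniform distribution on [-tt, tt] *)
  ((forall tt : R, 0 < tt <= PI ->
      (exists rho, is_stationary (p_uniform tt) rho) /\
      (forall rho, is_stationary (p_uniform tt) rho ->
         m11 rho = RtoC (F_uniform tt) /\ m12 rho = RtoC 0 /\ m21 rho = RtoC 0)) /\
   (exists K delta : R, 0 < delta /\
      forall tt : R, 0 < tt < delta ->
        Rabs (F_uniform tt - (1 - tt ^ 4 / 80)) <= K * tt ^ 6)) /\
  (* (ii) von Mises distribution *)
  ((forall sigma : R, 0 < sigma ->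
      (exists rho, is_stationary (p_vonMises sigma) rho) /\
      (forall rho, is_stationary (p_vonMises sigma) rho ->
         m11 rho = RtoC (F_vonMises sigma) /\ m12 rho = RtoC 0 /\ m21 rho = RtoC 0)) /\
   (exists K delta : R, 0 < delta /\
      forall sigma : R, 0 < sigma < delta ->
        Rabs (F_vonMises sigma - (1 - 3 / 16 * sigma ^ 4)) <= K * sigma ^ 6)).
Proof.
  split; split.
  - intros tt Ht. apply part_i_a; exact Ht.
  - exact part_i_b.
  - intros sigma Hs. apply part_ii_a; exact Hs.
  - exact part_ii_b.
Qed.
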